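(* For $1\le i\le n$ define the polynomial $$F(n,i)(p,q)=\sum_{\pi\in S_n,\ \pi_n=i}p^{\mathrm{inv}(\pi)}q^{\mathrm{maj}(\pi)} .$$ Then $F(1,1)=1$, and for $n\ge 2$: $$F(n,i)=p^{n-i}\sum_{j=1}^{i-1}F(n-1,j)+p^{n-i}q^{n-1}\sum_{j=i}^{n-1}F(n-1,j)\qquad(1\le i\le n),$$ and consequently $$F(n,i)=p\,F(n,i+1)+p^{n-i}(q^{n-1}-1)F(n-1,i)\quad (1\le i<n),\qquad F(n,n)=\sum_{j=1}^{n-1}F(n-1,j).$$ Moreover $\sum_{\pi\in S_n}p^{\mathrm{inv}(\pi)}q^{\mathrm{maj}(\pi)}=F(n+1,n+1)(p,q)$.
   Context: For a permutation $\pi=\pi_1\cdots\pi_n$ of $\{1,\dots,n\}$: $\mathrm{inv}(\pi)$ is the number of pairs $1\le i<j\le n$ with $\pi_i>\pi_j$, and $\mathrm{maj}(\pi)$ is the sum of all positions $i\in\{1,\dots,n-1\}$ with $\pi_i>\pi_{i+1}$. *)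

(* Defs.v *)
From HB Require Import structures.
From mathcomp Require Import all_boot all_order all_algebra.
From mathcomp Require Import fingroup perm.
Set Implicit Arguments. Unset Strict Implicit. Unset Printing Implicit Defensive.
Import GRing.Theory.

(* One-line notation pi_1 ... pi_n of s : 'S_n, with 0-based values:
   (word s)`_k = pi_{k+1} - 1. *)
Definition word n (s : 'S_n) : seq nat := [seq val (s k) | k <- enum 'I_n].

Definition ninv n (s : 'S_n) : nat :=
  #|[set ab : 'I_n * 'I_n | (ab.1 < ab.2)%N && (s ab.2 < s ab.1)%N]|.

Definition maj n (s : 'S_n) : nat :=
  \sum_(k < n.-1 | nth 0 (word s) k.+1 < nth 0 (word s) k) k.+1.

(* F(n,i)(p,q) = sum over pi in S_n with pi_n = i of p^inv q^maj,
   evaluated at arbitrary p q in a commutative ring (this covers the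
   polynomial identity by taking R = Z[p,q]). *)
Local Open Scope ring_scope.
Definition F (R : comNzRingType) (n i : nat) (p q : R) : R :=
  \sum_(s : 'S_n | nth 0%N (word s) n.-1 == i.-1) p ^+ ninv s * q ^+ maj s.

(* Main.v *)
Require Import Defs.
From HB Require Import structures.
From mathcomp Require Import all_boot all_order all_algebra.
From mathcomp Require Import fingroup perm.
Import GRing.Theory.
Set Implicit Arguments. Unset Strict Implicit.

Lemma widen_lift n (i : 'I_n) : widen_ord (leqnSn n) i = lift ord_max i.
Proof. by apply: val_inj; rewrite /= /bump leqNgt ltn_ord. Qed.

Lemma reindex_last (R : comNzRingType) n (j : 'I_n.+1) (f : 'S_n.+1 -> R) :
  (\sum_(s : 'S_n.+1 | s ord_max == j) f s = \sum_(t : 'S_n) f (lift_perm ord_max j t))%R.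
Proof.
rewrite (reindex (lift_perm ord_max j)); last first.
  pose ulsf i (s : 'S_n.+1) k := odflt k (unlift (s i) (s (lift i k))).
  have ulsfK i (s : 'S_n.+1) k: lift (s i) (ulsf i s k) = s (lift i k).
    rewrite /ulsf; have:= neq_lift i k.
    by rewrite -(can_eq (permK s)) => /unlift_some[] ? ? ->.
  have inj_ulsf: injective (ulsf ord_max _).
    move=> s; apply: can_inj (ulsf (s ord_max) s^-1%g) _ => k'.
    by rewrite {1}/ulsf ulsfK !permK liftK.
  exists (fun s => perm (inj_ulsf s)) => [s _ | s].
    by apply/permP=> k'; rewrite permE /ulsf lift_perm_lift lift_perm_id liftK.
  move/(s _ =P _) => si0; apply/permP=> k.
  case: (unliftP ord_max k) => [k'|] ->; rewrite ?lift_perm_id //.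
  by rewrite lift_perm_lift -si0 permE ulsfK.
by apply: eq_bigl => s; rewrite lift_perm_id eqxx.
Qed.

Lemma ninvE n (s : 'S_n) :
  ninv s = \sum_(a : 'I_n) \sum_(b : 'I_n) ((a < b) && (s b < s a)).
Proof.
rewrite /ninv -sum1_card pair_big /= big_mkcond /=.
by apply: eq_bigr => ab _; rewrite inE; case: ifP.
Qed.

Lemma bump_lt h i j : (bump h i < bump h j) = (i < j).
Proof. by rewrite !ltnNge leq_bump2. Qed.

Lemma count_ge n j : \sum_(k < n) (j <= k) = n - j.
Proof.
elim: n => [|n IH]; first by rewrite big_ord0.
rewrite big_ord_recr /= IH.
case: (leqP j n) => H; first by rewrite addn1 subSn.
rewrite addn0; have -> : n.+1 - j = 0 by apply/eqP; rewrite subn_eq0.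
by apply/eqP; rewrite subn_eq0 ltnW.
Qed.

Lemma ninv_lift n (j : 'I_n.+1) (t : 'S_n) :
  ninv (lift_perm ord_max j t) = ninv t + (n - j).
Proof.
rewrite !ninvE big_ord_recr /= big_ord_recr /= ltnn andFb addn0.
rewrite [X in _ + X = _]big1 ?addn0; last first.
  by move=> b _; rewrite ltnNge (ltnW (ltn_ord b)).
rewrite -count_ge [X in _ = _ + X](reindex_inj (@perm_inj _ t)) -big_split /=; apply: eq_bigr => a _.
rewrite big_ord_recr /= !widen_lift !lift_perm_lift lift_perm_id.
congr (_ + _).
  apply: eq_bigr => b _; rewrite widen_lift !lift_perm_lift /=.
  by rewrite bump_lt.
rewrite ltn_ord /= /bump.
case: (leqP j (t a)) => H /=.
  by rewrite add1n ltnS H.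
by rewrite add0n ltnNge (ltnW H).
Qed.

Lemma nth_word N (s : 'S_N.+1) k : k < N.+1 -> nth 0 (word s) k = s (inord k).
Proof.
move=> Hk; rewrite /word (nth_map ord0) ?size_enum_ord //.
congr (val (s _)); apply: val_inj; rewrite /= inordK // nth_enum_ord //.
Qed.

Lemma inord_lift N k : k < N.+1 -> (inord k : 'I_N.+2) = lift ord_max (inord k : 'I_N.+1).
Proof.
move=> Hk; have H1 : k < N.+2 by apply: ltnW.
apply: val_inj; rewrite /= /bump (inordK H1) (inordK Hk).
by rewrite leqNgt Hk.
Qed.

Lemma maj_lift n (j : 'I_n.+2) (t : 'S_n.+1) :
  maj (lift_perm ord_max j t) = maj t + (j <= t ord_max) * n.+1.
Proof.
rewrite /maj /= big_mkcond big_ord_recr /= -big_mkcond.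
congr (_ + _).
  apply: eq_bigl => k.
  have Hk := ltn_ord k.
  rewrite !nth_word ?ltnS ?(ltnW Hk) ?(ltnW (ltnW Hk)) //.
  rewrite (@inord_lift _ k.+1) // (@inord_lift _ k) ?ltnS ?(ltnW Hk) //.
  by rewrite !lift_perm_lift /= bump_lt.
  by apply: leqW; apply: ltnW.
rewrite !nth_word // (@inord_lift _ n) //.
have -> : (inord n.+1 : 'I_n.+2) = ord_max by apply: val_inj; rewrite /= inordK.
have -> : (inord n : 'I_n.+1) = ord_max by apply: val_inj; rewrite /= inordK.
rewrite lift_perm_id lift_perm_lift /= /bump.
case: (leqP j (t ord_max)) => H /=.
  by rewrite add1n ltnS H mul1n.
by rewrite add0n ltnNge (ltnW H).
Qed.

Local Open Scope ring_scope.

Section FR.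
Variables (R : comNzRingType) (p q : R).

Lemma F_ordmax m (k : 'I_m.+1) :
  F m.+1 k.+1 p q = \sum_(s : 'S_m.+1 | s ord_max == k) p ^+ ninv s * q ^+ maj s.
Proof.
rewrite /F; apply: eq_bigl => s /=; rewrite nth_word //.
by have -> : (inord m : 'I_m.+1) = ord_max by apply: val_inj; rewrite /= inordK.
Qed.

Lemma F_rec m (j : 'I_m.+2) :
  F m.+2 j.+1 p q = \sum_(k < m.+1)
     p ^+ (m.+1 - j) * (if (j <= k)%N then q ^+ m.+1 else 1) * F m.+1 k.+1 p q.
Proof.
rewrite F_ordmax reindex_last.
rewrite (partition_big (fun s : 'S_m.+1 => s ord_max) predT) //=.
apply: eq_bigr => k _; rewrite F_ordmax mulr_sumr.
apply: eq_bigr => s /eqP Hs.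
rewrite ninv_lift maj_lift Hs !exprD.
case: (j <= k)%N; rewrite ?mul1n ?mul0n ?expr0 ?mulr1 ?mul1r.
  by rewrite mulrACA mulrC.
by rewrite -mulrA mulrCA.
Qed.

Lemma split_if m i (P Q : R) (G : nat -> R) : (i <= m.+1)%N ->
  \sum_(0 <= k < m.+1) P * (if (i <= k)%N then Q else 1) * G k =
  P * (\sum_(0 <= k < i) G k) + P * Q * (\sum_(i <= k < m.+1) G k).
Proof.
move=> Hi; rewrite (big_cat_nat _ (n:=i)) //=; congr (_ + _); rewrite mulr_sumr;
  apply: eq_big_nat => k /andP[H1 H2].
  by rewrite leqNgt H2 mulr1.
by rewrite H1.
Qed.

Lemma part2 n i : (2 <= n)%N -> (1 <= i <= n)%N ->
  F n i p q =
    p ^+ (n - i) * (\sum_(1 <= j < i) F n.-1 j p q)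
    + p ^+ (n - i) * q ^+ n.-1 * (\sum_(i <= j < n) F n.-1 j p q).
Proof.
case: n => [|[|m]] //= _; case: i => [|i] //= Hi.
have := @F_rec m (Ordinal Hi); rewrite /= => ->.
rewrite !big_add1 /= subSS.
rewrite -(big_mkord xpredT (fun k => p ^+ (m.+1 - i) * (if (i <= k)%N then q ^+ m.+1 else 1) * F m.+1 k.+1 p q)).
exact: split_if.
Qed.

Lemma alg (P A Fi B Q : R) :
  p * P * A + p * P * Q * (Fi + B) =
  p * (P * (A + Fi) + P * Q * B) + p * P * (Q - 1) * Fi.
Proof.
rewrite mulrBr mulr1 mulrBl !mulrDr !mulrA.
rewrite -!addrA; congr (_ + _).
rewrite [RHS]addrCA [p * P * Fi + _]addrC addrNK.
by rewrite addrC.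
Qed.

Lemma part3 n i : (2 <= n)%N -> (1 <= i < n)%N ->
  F n i p q = p * F n i.+1 p q + p ^+ (n - i) * (q ^+ n.-1 - 1) * F n.-1 i p q.
Proof.
move=> Hn /andP[H1 H2].
rewrite (@part2 n i) ?H1 ?(ltnW H2) // (@part2 n i.+1) ?H2 //.
have e: (n - i = (n - i.+1).+1)%N by rewrite subnS prednK // subn_gt0.
rewrite e exprS big_nat_recr // (big_ltn H2).
exact: alg.
Qed.

Lemma part4 n : (2 <= n)%N -> F n n p q = \sum_(1 <= j < n) F n.-1 j p q.
Proof.
move=> Hn; rewrite (@part2 n n) //; last by rewrite leqnn andbT (ltnW Hn).
rewrite subnn expr0 !mul1r.
by rewrite (@big_geq _ _ _ n n) // mulr0 addr0.
Qed.

Lemma S1 (s : 'S_1) : s = 1%g.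
Proof. by apply/permP => x; rewrite perm1 !ord1. Qed.

Lemma S0 (s : 'S_0) : s = 1%g.
Proof. by apply/permP => [[]]. Qed.

Lemma part1 : F 1 1 p q = 1.
Proof.
have := @F_ordmax 0 ord0; rewrite /= => ->.
rewrite (big_pred1 1%g); last first.
  by move=> s; rewrite (S1 s) /= eqxx; apply/eqP; apply: ord1.
rewrite ninvE !big_ord1 /maj big_ord0 /=.
by rewrite expr0 mulr1.
Qed.

Lemma part5 n : \sum_(s : 'S_n) p ^+ ninv s * q ^+ maj s = F n.+1 n.+1 p q.
Proof.
case: n => [|m].
  rewrite part1 (big_pred1 1%g); last by move=> s; rewrite /= (S0 s) eqxx.
  by rewrite ninvE big_ord0 /maj big_ord0 mulr1.
rewrite part4 // big_add1 /=.
rewrite big_mkord.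
rewrite (partition_big (fun s : 'S_m.+1 => s ord_max) predT) //=.
by apply: eq_bigr => k _; rewrite F_ordmax.
Qed.

End FR.


Theorem mainTheorem5 (R : comNzRingType) (p q : R) :
  [/\ F 1 1 p q = 1,
      (forall n i : nat, (2 <= n)%N -> (1 <= i <= n)%N ->
         F n i p q =
           p ^+ (n - i) * (\sum_(1 <= j < i) F n.-1 j p q)
           + p ^+ (n - i) * q ^+ n.-1 * (\sum_(i <= j < n) F n.-1 j p q)),
      (forall n i : nat, (2 <= n)%N -> (1 <= i < n)%N ->
         F n i p q = p * F n i.+1 p q + p ^+ (n - i) * (q ^+ n.-1 - 1) * F n.-1 i p q),
      (forall n : nat, (2 <= n)%N -> F n n p q = \sum_(1 <= j < n) F n.-1 j p q)
    & (forall n : nat,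
         \sum_(s : 'S_n) p ^+ ninv s * q ^+ maj s = F n.+1 n.+1 p q)].
Proof.
split.
- exact: part1.
- move=> n i; exact: part2.
- move=> n i; exact: part3.
- move=> n; exact: part4.
- move=> n; exact: part5.
Qed.
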